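(* Let $n\ge2$ and $\mathbf{F}\in\mathbb{R}^n$ with $F_k>0$ for all $k$ and $F_k\ge F_{k+1}$ for $2\le k\le n-1$. Let $U_i=\frac{i}{3/F_1+\sum_{k=2}^i1/F_k}$ for $1\le i\le n$, let $u$ be the least index in $\arg\max_{1\le i\le n}U_i$, and define $\boldsymbol\mu\in\mathbb{R}^{n-1}$ by $\mu_k=\frac13\big(1-\frac{U_u}{F_{k+1}}\big)$ for $1\le k\le u-1$ and $\mu_k=0$ for $u\le k\le n-1$. Then: (1) $\mu_k\ge0$ for all $1\le k\le n-1$; (2) $F_1\big(\frac13+\sum_{i=1}^{u-1}\mu_i\big)=F_k(1-3\mu_{k-1})=U_u$ for all $2\le k\le u$; (3) $F_k\le U_u$ for all $u+1\le k\le n$.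
   Context: Note $U_u=\frac{u}{3/F_1+\sum_{k=2}^u1/F_k}$. *)

(* Defs.v *)
From mathcomp Require Import all_boot all_order all_algebra.
Set Implicit Arguments. Unset Strict Implicit. Unset Printing Implicit Defensive.
Import Order.TTheory GRing.Theory Num.Theory.
Local Open Scope ring_scope.

(* Vectors F in R^n are represented 1-based as F : nat -> R, only F 1..F n matter. *)

Definition Uval (R : realFieldType) (F : nat -> R) (i : nat) : R :=
  i%:R / (3 / F 1%N + \sum_(2 <= k < i.+1) (F k)^-1).

Definition muval (R : realFieldType) (F : nat -> R) (u k : nat) : R :=
  if (1 <= k <= u.-1)%N then (1 - Uval F u / F k.+1) / 3 else 0.

(* Main.v *)
Require Import Defs.
From mathcomp Require Import all_boot all_order all_algebra.
From mathcomp Require Import ring lra zify.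
Import Order.TTheory GRing.Theory Num.Theory.
Local Open Scope ring_scope.
Lemma med_lt (R : realFieldType) (a b c d : R) : 0 < b -> 0 < d ->
  a / b < (a + c) / (b + d) -> (a + c) / (b + d) < c / d.
Proof.
move=> hb hd.
set t := (a + c) / (b + d).
have e : a + c = t * b + t * d.
  by rewrite -mulrDr /t divfK // gt_eqF // addr_gt0.
rewrite ltr_pdivrMr // ltr_pdivlMr // => h; lra.
Qed.
Lemma med_le (R : realFieldType) (a b c d : R) : 0 < b -> 0 < d ->
  (a + c) / (b + d) <= a / b -> c / d <= (a + c) / (b + d).
Proof.
move=> hb hd.
set t := (a + c) / (b + d).
have e : a + c = t * b + t * d.
  by rewrite -mulrDr /t divfK // gt_eqF // addr_gt0.
rewrite ler_pdivlMr // ler_pdivrMr // => h; lra.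
Qed.

Theorem lemma6 (R : realFieldType) (n : nat) (F : nat -> R) (u : nat) :
  (2 <= n)%N ->
  (forall k, (1 <= k <= n)%N -> 0 < F k) ->
  (forall k, (2 <= k <= n.-1)%N -> F k.+1 <= F k) ->
  (* u is the least index in argmax_{1<=i<=n} U_i *)
  (1 <= u <= n)%N ->
  (forall i, (1 <= i <= n)%N -> Uval F i <= Uval F u) ->
  (forall i, (1 <= i < u)%N -> Uval F i < Uval F u) ->
  [/\ (forall k, (1 <= k <= n.-1)%N -> 0 <= muval F u k),
      (forall k, (2 <= k <= u)%N ->
         F 1%N * (3^-1 + \sum_(1 <= i < u) muval F u i) = Uval F u /\
         F k * (1 - 3 * muval F u k.-1) = Uval F u)
    & (forall k, (u.+1 <= k <= n)%N -> F k <= Uval F u)].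
Proof.
move=> hn HF Hdec /andP[u1 un] Hmax Hlt.
pose S i := 3 / F 1%N + \sum_(2 <= k < i.+1) (F k)^-1.
have US i : Uval F i = i%:R / S i by [].
have Spos i : (i <= n)%N -> 0 < S i.
  move=> hi; rewrite /S ltr_wpDr //; last first.
    by rewrite divr_gt0 // HF //; lia.
  rewrite big_nat_cond; apply: sumr_ge0 => k /andP[/andP[h1 h2] _].
  by apply/ltW; rewrite invr_gt0 HF //; lia.
have Srec i : (1 <= i)%N -> S i.+1 = S i + (F i.+1)^-1.
  by move=> hi; rewrite /S big_nat_recr /= ?addrA //; lia.
have Fchain j k : (2 <= j)%N -> (j <= k)%N -> (k <= n)%N -> F k <= F j.
  move=> hj; elim: k => [|k IH] hjk hkn; first lia.
  case: (ltngtP j k.+1) => h; [|lia|by rewrite h].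
  apply: le_trans (IH _ _); [apply: Hdec|..]; lia.
have Fne k : (1 <= k <= n)%N -> F k != 0 by move=> h; rewrite gt_eqF // HF.
have FuU : (2 <= u)%N -> Uval F u <= F u.
  move=> u2.
  have h := Hlt u.-1 ltac:(lia).
  have ep : u = (u.-1).+1 by lia.
  have eu : (u%:R : R) = (u.-1)%:R + 1 by rewrite {1}ep -natr1.
  have eS : S u = S u.-1 + (F u)^-1 by rewrite {1}ep Srec ?prednK //; lia.
  rewrite !US in h; rewrite US; rewrite eu eS in h *.
  apply/ltW; rewrite [X in _ < X](_ : F u = 1 / (F u)^-1); last by rewrite div1r invrK.
  apply: med_lt => //; first by apply: Spos; lia.
  by rewrite invr_gt0 HF //; lia.
have FjU j : (2 <= j <= u)%N -> Uval F u <= F j.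
  move=> hj; apply: le_trans (FuU _) _; first lia.
  apply: Fchain; lia.
split.
- move=> k hk; rewrite /muval; case: ifP => h; last by [].
  apply: divr_ge0 => //; rewrite subr_ge0 ler_pdivrMr ?mul1r; last by rewrite HF //; lia.
  by apply: FjU; lia.
- move=> k hk; split.
  + rewrite big_nat_cond (eq_bigr (fun i => (1 - Uval F u / F i.+1) / 3)); last first.
      by move=> i /andP[hi _]; rewrite /muval ifT //; lia.
    rewrite -big_nat_cond -mulr_suml sumrB sumr_const_nat -mulr_sumr.
    have hT : S u = 3 / F 1%N + \sum_(1 <= i < u) (F i.+1)^-1 by rewrite /S big_add1.
    have hS : S u != 0 by rewrite gt_eqF // Spos.
    have h1 : F 1%N != 0 by apply: Fne; lia.
    rewrite hT in hS; rewrite /Uval.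
    rewrite -/(S u) hT.
    set T := \sum_(1 <= i < u) (F i.+1)^-1 in hS *.
    rewrite -mulr_natr mul1r natrB //.
    field; rewrite h1 /=.
    have -> : 3 + T * F 1%N = (3 / F 1%N + T) * F 1%N by field.
    by rewrite mulf_neq0.
  + rewrite /muval ifT; last lia.
    have -> : k.-1.+1 = k by lia.
    have hF : F k != 0 by apply: Fne; lia.
    by field.
- move=> k hk.
  apply: le_trans (Fchain (u.+1) k _ _ _) _; try lia.
  have h := Hmax u.+1 ltac:(lia).
  rewrite !US Srec // -natr1 in h *.
  rewrite [X in X <= _](_ : F u.+1 = 1 / (F u.+1)^-1); last by rewrite div1r invrK.
  have h2 := h; apply: le_trans h2; apply: med_le h; first by apply: Spos; lia.
  by rewrite invr_gt0 HF //; lia.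
Qed.
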